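(* For every integer $n\ge 1$ and every real $x>0$, \[ \left[\frac{1}{n}\left(\frac{x}{(n-1)!}-\left(\left(\frac{(n-1)!}{x}\right)^{1/n}+1\right)^{-n}\right)\right]^{-\frac{1}{n+1}} <\left((-1)^{n-1}\psi^{(n)}\right)^{-1}(x) <\left(\frac{(n-1)!}{x}\right)^{1/n}+\frac{1}{2}. \]
   Context: $\Gamma$ is the Euler gamma function and $\psi=\Gamma'/\Gamma$ is the digamma function; $\psi^{(n)}$ denotes its $n$-th derivative. For each integer $n\ge1$ the map $t\mapsto(-1)^{n-1}\psi^{(n)}(t)=n!\sum_{k\ge0}(t+k)^{-(n+1)}$ is a strictly decreasing bijection from $(0,\infty)$ onto $(0,\infty)$, and $\left((-1)^{n-1}\psi^{(n)}\right)^{-1}$ denotes its inverse function. *)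

(* Defs.v *)
From Stdlib Require Import Reals Arith Factorial.
Open Scope R_scope.

Definition polygamma_term (n : nat) (t : R) (k : nat) : R :=
  INR (fact n) / (t + INR k) ^ (n + 1).

(* psi_abs n t v  :<->  (-1)^(n-1) * psi^(n)(t) = v,
   using the series representation given in the context:
   (-1)^(n-1) psi^(n)(t) = n! * sum_{k>=0} (t+k)^{-(n+1)}. *)
Definition psi_abs (n : nat) (t v : R) : Prop :=
  infinite_sum (polygamma_term n t) v.

Definition ub (n : nat) (x : R) : R :=
  Rpower (INR (fact (n - 1)) / x) (1 / INR n) + 1 / 2.

Definition lb (n : nat) (x : R) : R :=
  Rpower
    ((1 / INR n) *
       (x / INR (fact (n - 1))
        - / (Rpower (INR (fact (n - 1)) / x) (1 / INR n) + 1) ^ n))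
    (- (1 / INR (n + 1))).

(* Main.v *)
Require Import Defs.
From Stdlib Require Import Reals Lra Lia Arith Factorial.
From Coquelicot Require Import Coquelicot.
Open Scope R_scope.

Lemma L1 (k : nat) (w : R) : 0 < w ->
  0 <= INR k * w ^ (S k) - INR (S k) * w ^ k + 1.
Proof.
  intros Hw. induction k as [|k IH].
  - simpl. lra.
  - assert (E : INR (S k) * w ^ S (S k) - INR (S (S k)) * w ^ S k + 1
      = (INR k * w ^ S k - INR (S k) * w ^ k + 1) + INR (S k) * w ^ k * (w - 1)^2).
    { rewrite !S_INR. simpl. ring. }
    rewrite E. assert (0 <= INR (S k) * w ^ k * (w - 1) ^ 2).
    { apply Rmult_le_pos; [apply Rmult_le_pos; [apply pos_INR| apply pow_le; lra] | ].
      simpl. rewrite Rmult_1_r. apply Rle_0_sqr. }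
    lra.
Qed.

Lemma L1s (k : nat) (w : R) : 0 < w -> (1 <= k)%nat -> w <> 1 ->
  0 < INR k * w ^ (S k) - INR (S k) * w ^ k + 1.
Proof.
  intros Hw Hk Hw1. induction k as [|k IH].
  - lia.
  - assert (E : INR (S k) * w ^ S (S k) - INR (S (S k)) * w ^ S k + 1
      = (INR k * w ^ S k - INR (S k) * w ^ k + 1) + INR (S k) * w ^ k * (w - 1)^2).
    { rewrite !S_INR. simpl. ring. }
    rewrite E. assert (0 < INR (S k) * w ^ k * (w - 1) ^ 2).
    { apply Rmult_lt_0_compat; [apply Rmult_lt_0_compat; [apply lt_0_INR; lia| apply pow_lt; lra] | ].
      simpl. rewrite Rmult_1_r. assert (w - 1 <> 0) by lra. apply Rsqr_pos_lt; auto. }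
    pose proof (L1 k w Hw). lra.
Qed.

Lemma incr_strict (h h' : R -> R) (a b u0 : R) : a < b ->
  (forall c, a <= c <= b -> derivable_pt_lim h c (h' c)) ->
  (forall c, a < c < b -> 0 <= h' c) ->
  (forall c, a < c < b -> c <> u0 -> 0 < h' c) -> h a < h b.
Proof.
  intros Hab Hd H0 H1.
  set (m := (a + b) / 2).
  destruct (MVT_cor2 h h' a m) as [c1 [E1 R1]]; [unfold m; lra| intros; apply Hd; unfold m in *; lra |].
  destruct (MVT_cor2 h h' m b) as [c2 [E2 R2]]; [unfold m; lra| intros; apply Hd; unfold m in *; lra |].
  assert (h1 : 0 <= h' c1) by (apply H0; unfold m in *; lra).
  assert (h2 : 0 <= h' c2) by (apply H0; unfold m in *; lra).
  destruct (Req_dec c1 u0) as [e|ne].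
  - assert (0 < h' c2) by (apply H1; unfold m in *; lra).
    assert (0 <= h' c1 * (m - a)) by (apply Rmult_le_pos; unfold m; lra).
    assert (0 < h' c2 * (b - m)) by (apply Rmult_lt_0_compat; unfold m; lra).
    lra.
  - assert (0 < h' c1) by (apply H1; unfold m in *; lra).
    assert (0 < h' c1 * (m - a)) by (apply Rmult_lt_0_compat; unfold m; lra).
    assert (0 <= h' c2 * (b - m)) by (apply Rmult_le_pos; unfold m; lra).
    lra.
Qed.
Definition fr (s : nat) (u : R) := / u ^ (S s).
Definition ph (s : nat) (u : R) := / (INR s * u ^ s).
Definition JJ (s : nat) (p : R) := ph s p - ph s (p + 1).

Lemma D_ph (s : nat) (u : R) : 0 < u -> (1 <= s)%nat ->
  derivable_pt_lim (ph s) u (- fr s u).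
Proof.
  intros Hu Hs. apply is_derive_Reals. unfold ph, fr.
  assert (Hk : 0 < INR s) by (apply lt_0_INR; lia).
  assert (Hp : 0 < u ^ s) by (apply pow_lt; lra).
  assert (Hp1 : 0 < u ^ pred s) by (apply pow_lt; lra).
  assert (E : u ^ s = u * u ^ pred s) by (destruct s; [lia| reflexivity]).
  auto_derive.
  - nra.
  - simpl. rewrite E. field. split; lra.
Qed.

Lemma T_gen (r : nat) (u m : R) : 0 < u -> 0 < m ->
  / u ^ (S r) - (/ m ^ (S r) - INR (S r) * / m ^ (S (S r)) * (u - m))
  = (INR (S r) * (u/m) ^ (S (S r)) - INR (S (S r)) * (u/m) ^ (S r) + 1) / (m ^ S r * (u/m) ^ S r).
Proof.
  intros Hu Hm.
  set (w := u / m).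
  assert (Ew : u = w * m) by (unfold w; field; lra).
  assert (Hw : 0 < w) by (unfold w; apply Rdiv_lt_0_compat; lra).
  rewrite Ew. rewrite Rpow_mult_distr.
  assert (0 < w ^ S r) by (apply pow_lt; lra).
  assert (0 < m ^ S r) by (apply pow_lt; lra).
  change (w ^ S (S r)) with (w * w ^ S r). change (m ^ S (S r)) with (m * m ^ S r).
  rewrite (S_INR (S r)). field. repeat split; lra.
Qed.

Lemma Tang (r : nat) (u m : R) : 0 < u -> 0 < m ->
  / m ^ (S r) - INR (S r) * / m ^ (S (S r)) * (u - m) <= / u ^ (S r).
Proof.
  intros Hu Hm. pose proof (T_gen r u m Hu Hm) as E.
  assert (Hw : 0 < u / m) by (apply Rdiv_lt_0_compat; lra).
  assert (0 <= (INR (S r) * (u/m) ^ (S (S r)) - INR (S (S r)) * (u/m) ^ (S r) + 1) / (m ^ S r * (u/m) ^ S r)).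
  { apply Rmult_le_pos. apply L1; auto. left; apply Rinv_0_lt_compat.
    apply Rmult_lt_0_compat; apply pow_lt; lra. }
  lra.
Qed.

Lemma Tang_s (r : nat) (u m : R) : 0 < u -> 0 < m -> u <> m ->
  / m ^ (S r) - INR (S r) * / m ^ (S (S r)) * (u - m) < / u ^ (S r).
Proof.
  intros Hu Hm Hne. pose proof (T_gen r u m Hu Hm) as E.
  assert (Hw : 0 < u / m) by (apply Rdiv_lt_0_compat; lra).
  assert (Hw1 : u / m <> 1).
  { intro C. apply Hne. assert (u = (u/m) * m) by (field; lra). rewrite C in H. lra. }
  assert (0 < (INR (S r) * (u/m) ^ (S (S r)) - INR (S (S r)) * (u/m) ^ (S r) + 1) / (m ^ S r * (u/m) ^ S r)).
  { apply Rmult_lt_0_compat. apply L1s; auto; lia. apply Rinv_0_lt_compat.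
    apply Rmult_lt_0_compat; apply pow_lt; lra. }
  lra.
Qed.

Lemma der_phP (s : nat) (u : R) (P : R -> R) (P' : R) : 0 < u -> (1 <= s)%nat ->
  derivable_pt_lim P u P' ->
  derivable_pt_lim (fun v => - ph s v + P v) u (fr s u + P').
Proof.
  intros Hu Hs HP.
  replace (fr s u + P') with (- - fr s u + P') by ring.
  change (fun v => - ph s v + P v) with (plus_fct (opp_fct (ph s)) P).
  apply derivable_pt_lim_plus; auto.
  apply derivable_pt_lim_opp. apply D_ph; auto.
Qed.

Lemma midpoint (s : nat) (c : R) : 0 < c -> (1 <= s)%nat -> fr s (c + /2) < JJ s c.
Proof.
  intros Hc Hs. set (m := c + /2).
  set (K := INR (S s) * / m ^ (S (S s))).
  set (h := fun v => - ph s v + (- fr s m * v + K * (v - m)^2 / 2)).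
  set (h' := fun v => fr s v + (- fr s m + K * (v - m))).
  assert (Hlt : h c < h (c+1)).
  { apply (incr_strict h h' c (c+1) m); [lra| | |].
    - intros v Hv. unfold h, h'. apply der_phP; [lra|auto|].
      apply is_derive_Reals. auto_derive; auto. simpl. field.
    - intros v Hv. unfold h', fr, K. pose proof (Tang s v m). unfold m in *. lra.
    - intros v Hv Hne. unfold h', fr, K. pose proof (Tang_s s v m). unfold m in *. lra. }
  unfold h, JJ in *. unfold m in *. lra.
Qed.

Lemma pow_lt_base (a b : R) (k : nat) : 0 <= a < b -> (1 <= k)%nat -> a ^ k < b ^ k.
Proof.
  intros Hab Hk. induction k as [|k IH]; [lia|].
  destruct k as [|k]. simpl; lra.
  assert (a ^ S k < b ^ S k) by (apply IH; lia).
  assert (0 <= a ^ S k) by (apply pow_le; lra).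
  change (a ^ S (S k)) with (a * a ^ S k). change (b ^ S (S k)) with (b * b ^ S k).
  nra.
Qed.

Lemma ph_pos (s : nat) (u : R) : 0 < u -> (1 <= s)%nat -> 0 < ph s u.
Proof.
  intros Hu Hs. unfold ph. apply Rinv_0_lt_compat. apply Rmult_lt_0_compat.
  apply lt_0_INR; lia. apply pow_lt; lra.
Qed.

Lemma fr_pos (s : nat) (u : R) : 0 < u -> 0 < fr s u.
Proof. intros Hu. unfold fr. apply Rinv_0_lt_compat. apply pow_lt; lra. Qed.

Lemma JJ_pos (s : nat) (q : R) : 0 < q -> (1 <= s)%nat -> 0 < JJ s q.
Proof.
  intros Hq Hs. unfold JJ, ph.
  assert (0 < INR s) by (apply lt_0_INR; lia).
  assert (q ^ s < (q+1) ^ s).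
  { apply pow_lt_base; [lra| lia]. }
  assert (0 < q ^ s) by (apply pow_lt; lra).
  assert (INR s * q ^ s < INR s * (q+1) ^ s) by (apply Rmult_lt_compat_l; lra).
  assert (/ (INR s * (q+1) ^ s) < / (INR s * q ^ s)).
  { apply Rinv_lt_contravar; auto. apply Rmult_lt_0_compat; nra. }
  lra.
Qed.

Lemma lyap_id (s : nat) (v c : R) : 0 < v -> 0 < c ->
  INR (S s) / INR (S (S s)) / c * fr (S s) v + c ^ (S s) / INR (S (S s)) - fr s v
  = (INR (S s) * (/ (v * c)) ^ (S (S s)) - INR (S (S s)) * (/ (v * c)) ^ (S s) + 1)
     * c ^ (S s) / INR (S (S s)).
Proof.
  intros Hv Hc. unfold fr. rewrite !pow_inv, !Rpow_mult_distr.
  assert (0 < v ^ S s) by (apply pow_lt; lra).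
  assert (0 < c ^ S s) by (apply pow_lt; lra).
  assert (0 < INR (S (S s))) by (apply lt_0_INR; lia).
  change (v ^ S (S s)) with (v * v ^ S s). change (c ^ S (S s)) with (c * c ^ S s).
  field. repeat split; lra.
Qed.

Lemma Rpower_pos (a b : R) : 0 < Rpower a b.
Proof. unfold Rpower. apply exp_pos. Qed.

Lemma lyap (s : nat) (q : R) : 0 < q -> (1 <= s)%nat ->
  JJ s q < Rpower (JJ (S s) q) (INR (S s) / INR (S (S s))).
Proof.
  intros Hq Hs.
  set (K := JJ (S s) q).
  assert (HK : 0 < K) by (apply JJ_pos; auto).
  set (N := INR (S (S s))).
  assert (HN : 0 < N) by (apply lt_0_INR; lia).
  set (c := Rpower K (/ N)).
  assert (Hc : 0 < c) by apply Rpower_pos.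
  assert (Ec1 : c ^ S s = Rpower K (INR (S s) / N)).
  { unfold c. rewrite <- Rpower_pow by auto. rewrite Rpower_mult. f_equal. unfold Rdiv. ring. }
  assert (Ec2 : c * c ^ S s = K).
  { change (c * c ^ S s) with (c ^ S (S s)). unfold c. rewrite <- Rpower_pow by auto.
    rewrite Rpower_mult. fold N. replace (/ N * N) with 1 by (field; lra). apply Rpower_1; auto. }
  set (coef := INR (S s) / N / c).
  set (h := fun v => coef * (- ph (S s) v) + (ph s v + c ^ (S s) * v / N)).
  set (h' := fun v => coef * fr (S s) v + (- fr s v + c ^ (S s) / N)).
  assert (Hlt : h q < h (q + 1)).
  { apply (incr_strict h h' q (q+1) (/ c)); [lra| | |].
    - intros v Hv. unfold h, h'.
      change (fun v0 => coef * - ph (S s) v0 + (ph s v0 + c ^ S s * v0 / N)) with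
        (plus_fct (mult_real_fct coef (opp_fct (ph (S s)))) (plus_fct (ph s) (fun v0 => c ^ S s * v0 / N))).
      replace (coef * fr (S s) v + (- fr s v + c ^ S s / N)) with
        (coef * (- - fr (S s) v) + (- fr s v + c ^ S s / N)) by ring.
      apply derivable_pt_lim_plus. apply derivable_pt_lim_scal. apply derivable_pt_lim_opp.
      apply D_ph; [lra|lia].
      apply derivable_pt_lim_plus. apply D_ph; [lra|lia].
      apply is_derive_Reals. auto_derive; auto. change (c ^ S s) with (c * c ^ s); unfold Rdiv; ring.
    - intros v Hv. unfold h', coef, N.
      assert (E := lyap_id s v c ltac:(lra) Hc).
      assert (0 <= (INR (S s) * (/ (v * c)) ^ (S (S s)) - INR (S (S s)) * (/ (v * c)) ^ (S s) + 1)
        * c ^ (S s) / INR (S (S s))).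
      { apply Rmult_le_pos. apply Rmult_le_pos. apply L1. apply Rinv_0_lt_compat; nra.
        apply pow_le; lra. left; apply Rinv_0_lt_compat; fold N; lra. }
      lra.
    - intros v Hv Hne. unfold h', coef, N.
      assert (E := lyap_id s v c ltac:(lra) Hc).
      assert (0 < (INR (S s) * (/ (v * c)) ^ (S (S s)) - INR (S (S s)) * (/ (v * c)) ^ (S s) + 1)
        * c ^ (S s) / INR (S (S s))).
      { apply Rmult_lt_0_compat. apply Rmult_lt_0_compat. apply L1s. apply Rinv_0_lt_compat; nra.
        lia. intro C. apply Hne. assert (v * c = 1).
        { rewrite <- (Rinv_inv (v * c)). rewrite C. apply Rinv_1. }
        field_simplify_eq; lra.
        apply pow_lt; lra. apply Rinv_0_lt_compat; fold N; lra. }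
      lra. }
  unfold h in Hlt.
  assert (E3 : coef * K = INR (S s) / N * c ^ S s).
  { unfold coef. rewrite <- Ec2. field. lra. }
  unfold K, JJ in E3. fold K in E3.
  rewrite <- Ec1.
  assert (INR (S s) / N * c ^ S s + c ^ S s / N = c ^ S s).
  { unfold N. rewrite (S_INR (S s)). field. fold N. replace (INR (S s) + 1) with N. lra.
    unfold N. rewrite (S_INR (S s)). auto. }
  unfold JJ. unfold JJ in E3. lra.
Qed.

Definition mm (s : nat) (q : R) := Rpower (JJ s q) (- / INR (S s)).

Lemma D_JJ (s : nat) (q : R) : 0 < q -> (1 <= s)%nat ->
  derivable_pt_lim (JJ s) q (- fr s q - - fr s (q + 1)).
Proof.
  intros Hq Hs. unfold JJ.
  change (fun p => ph s p - ph s (p + 1)) with (minus_fct (ph s) (fun p => ph s (p + 1))).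
  apply derivable_pt_lim_minus. apply D_ph; auto.
  replace (- fr s (q + 1)) with (- fr s (q + 1) * 1) by ring.
  change (fun p => ph s (p + 1)) with (comp (ph s) (fun p => p + 1)).
  apply derivable_pt_lim_comp.
  - apply is_derive_Reals. auto_derive; auto; try ring.
  - apply D_ph; [lra|auto].
Qed.

Lemma D_mm (s : nat) (q : R) : 0 < q -> (1 <= s)%nat ->
  derivable_pt_lim (mm s) q
   ((- / INR (S s) * Rpower (JJ s q) (- / INR (S s) - 1)) * (- fr s q - - fr s (q + 1))).
Proof.
  intros Hq Hs. unfold mm.
  change (fun q0 => Rpower (JJ s q0) (- / INR (S s))) with
    (comp (fun z => Rpower z (- / INR (S s))) (JJ s)).
  apply derivable_pt_lim_comp. apply D_JJ; auto.
  apply derivable_pt_lim_power. apply JJ_pos; auto.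
Qed.

Lemma mm_der_gt1 (s : nat) (q : R) : 0 < q -> (1 <= s)%nat ->
  1 < (- / INR (S s) * Rpower (JJ s q) (- / INR (S s) - 1)) * (- fr s q - - fr s (q + 1)).
Proof.
  intros Hq Hs.
  set (J := JJ s q). set (K := JJ (S s) q).
  assert (HJ : 0 < J) by (apply JJ_pos; auto).
  assert (HK : 0 < K) by (apply JJ_pos; auto).
  assert (H1 : 0 < INR (S s)) by (apply lt_0_INR; lia).
  assert (EK : fr s q - fr s (q + 1) = INR (S s) * K).
  { unfold K, JJ, ph, fr. assert (0 < q ^ S s) by (apply pow_lt; lra).
    assert (0 < (q+1) ^ S s) by (apply pow_lt; lra). field. repeat split; lra. }
  set (a := INR (S (S s)) / INR (S s)).
  assert (Ea : - / INR (S s) - 1 = - a).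
  { unfold a. rewrite (S_INR (S s)). field. lra. }
  rewrite Ea, Rpower_Ropp.
  assert (HL := lyap s q Hq Hs). fold J K in HL.
  assert (HJa : Rpower J a < K).
  { replace K with (Rpower (Rpower K (INR (S s) / INR (S (S s)))) a).
    apply Rlt_Rpower_l. unfold a. apply Rdiv_lt_0_compat; auto. apply lt_0_INR; lia.
    split; auto.
    rewrite Rpower_mult. unfold a. replace (INR (S s) / INR (S (S s)) * (INR (S (S s)) / INR (S s))) with 1.
    apply Rpower_1; auto. field. split; try lra. apply not_0_INR; lia. }
  assert (HP : 0 < Rpower J a) by apply Rpower_pos.
  replace (- / INR (S s) * / Rpower J a * (- fr s q - - fr s (q + 1))) with (K / Rpower J a).
  apply Rmult_lt_reg_r with (Rpower J a); auto. unfold Rdiv. rewrite Rmult_assoc, Rinv_l; lra.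
  replace (- fr s q - - fr s (q + 1)) with (- (fr s q - fr s (q + 1))) by ring.
  rewrite EK. field. lra.
Qed.

Lemma mm_step (s : nat) (p : R) : 0 < p -> (1 <= s)%nat -> mm s p + 1 < mm s (p + 1).
Proof.
  intros Hp Hs.
  destruct (MVT_cor2 (mm s)
    (fun q => (- / INR (S s) * Rpower (JJ s q) (- / INR (S s) - 1)) * (- fr s q - - fr s (q + 1)))
    p (p + 1)) as [c [E Hc]]; [lra| intros; apply D_mm; auto; lra|].
  assert (H := mm_der_gt1 s c ltac:(lra) Hs).
  replace (p + 1 - p) with 1 in E by ring. lra.
Qed.

Lemma g_dec (k z1 z2 : R) : 0 < k -> 0 < z1 -> z1 < z2 ->
  Rpower z2 (- / k) < Rpower z1 (- / k).
Proof.
  intros Hk H1 H2. unfold Rpower. apply exp_increasing.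
  assert (ln z1 < ln z2) by (apply ln_increasing; lra).
  assert (0 < / k) by (apply Rinv_0_lt_compat; lra).
  nra.
Qed.

Lemma g_inv (s : nat) (w : R) : 0 < w -> Rpower (fr s w) (- / INR (S s)) = w.
Proof.
  intros Hw. unfold fr, Rpower.
  rewrite ln_Rinv by (apply pow_lt; lra). rewrite ln_pow by lra.
  replace (- / INR (S s) * - (INR (S s) * ln w)) with (ln w).
  apply exp_ln; auto. field. apply not_0_INR; lia.
Qed.

Lemma Kp (s : nat) (p t : R) : 0 < p -> 0 < t -> (1 <= s)%nat ->
  JJ s p <= fr s t -> JJ s (p + 1) < fr s (t + 1).
Proof.
  intros Hp Ht Hs H.
  assert (Hk : 0 < INR (S s)) by (apply lt_0_INR; lia).
  assert (H1 : t <= mm s p).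
  { unfold mm. destruct H as [H|H].
    - rewrite <- (g_inv s t Ht) at 1. left. apply g_dec; auto. apply JJ_pos; auto.
    - rewrite H, g_inv; lra. }
  assert (H2 := mm_step s p Hp Hs).
  destruct (Rlt_le_dec (JJ s (p + 1)) (fr s (t + 1))) as [L|L]; auto.
  exfalso. unfold mm in H2.
  assert (Rpower (JJ s (p + 1)) (- / INR (S s)) <= t + 1).
  { rewrite <- (g_inv s (t + 1)) by lra. destruct L as [L|L].
    - left. apply g_dec; auto. apply fr_pos; lra.
    - rewrite L. lra. }
  unfold mm in H1. lra.
Qed.

Lemma psum_le (a : nat -> R) (l : R) (N : nat) : infinite_sum a l ->
  (forall k, 0 <= a k) -> sum_f_R0 a N <= l.
Proof. intros H Hp. apply sum_incr; auto. Qed.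

Lemma cv_const (B : R) : Un_cv (fun _ => B) B.
Proof. intros eps He. exists 0%nat. intros. unfold R_dist. replace (B - B) with 0 by ring.
  rewrite Rabs_R0. lra. Qed.

Lemma lim_le (a : nat -> R) (l B : R) : infinite_sum a l ->
  (forall N, sum_f_R0 a N <= B) -> l <= B.
Proof. intros H Hb. apply (@Rle_cv_lim (fun N => sum_f_R0 a N) (fun _ => B) l B); auto. apply cv_const. Qed.

Lemma lim_ge (a : nat -> R) (l B : R) : infinite_sum a l ->
  (forall N, B <= sum_f_R0 a N) -> B <= l.
Proof. intros H Hb. apply (@Rle_cv_lim (fun _ => B) (fun N => sum_f_R0 a N) B l); auto. apply cv_const. Qed.

Lemma isum_scal (a : nat -> R) (l c : R) : infinite_sum a l ->
  infinite_sum (fun k => c * a k) (c * l).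
Proof.
  intros H eps He. destruct (CV_mult (fun _ => c) (fun N => sum_f_R0 a N) c l (cv_const c) H eps He)
    as [N HN]. exists N. intros m Hm. specialize (HN m Hm). simpl in HN.
  rewrite scal_sum in HN. erewrite sum_eq. apply HN. intros; simpl; ring.
Qed.

Lemma isum_minus (a b : nat -> R) (la lb : R) : infinite_sum a la -> infinite_sum b lb ->
  infinite_sum (fun k => a k - b k) (la - lb).
Proof.
  intros Ha Hb eps He. destruct (CV_minus _ _ _ _ Ha Hb eps He) as [N HN].
  exists N. intros m Hm. rewrite minus_sum. apply HN; auto.
Qed.

Lemma telescope (s : nat) (c : R) (N : nat) :
  sum_f_R0 (fun k => JJ s (c + INR k)) N = ph s c - ph s (c + INR (S N)).
Proof.
  induction N as [|N IH].
  - simpl. unfold JJ. rewrite Rplus_0_r. reflexivity.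
  - rewrite tech5, IH. unfold JJ. replace (c + INR (S N) + 1) with (c + INR (S (S N))).
    ring. rewrite (S_INR (S N)). ring.
Qed.

Lemma ph_small (n : nat) (z : R) : (1 <= n)%nat -> 1 <= z -> ph n z <= / z.
Proof.
  intros Hn Hz. unfold ph. apply Rinv_le_contravar. lra.
  assert (1 <= INR n) by (apply (le_INR 1); auto).
  assert (z <= z ^ n) by (rewrite <- (pow_1 z) at 1; apply Rle_pow; auto).
  nra.
Qed.

Lemma lower_core (n : nat) (y a : R) : (1 <= n)%nat -> 0 < y -> 0 < a ->
  infinite_sum (fun k => fr n (y + INR k)) (ph n a) -> fr n y < JJ n a.
Proof.
  intros Hn Hy Ha HS.
  destruct (Rlt_le_dec (fr n y) (JJ n a)) as [L|H0]; auto. exfalso.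
  assert (Hind : forall k, JJ n (a + INR k) <= fr n (y + INR k)).
  { induction k as [|k IH].
    - simpl. rewrite !Rplus_0_r. auto.
    - rewrite !S_INR, <- !Rplus_assoc. left. apply Kp; auto.
      pose proof (pos_INR k); lra. pose proof (pos_INR k); lra. }
  assert (Hd : JJ n (a + 1) < fr n (y + 1)) by (apply Kp; auto).
  set (d := fun k => fr n (y + INR k) - JJ n (a + INR k)).
  set (delta := fr n (y + 1) - JJ n (a + 1)).
  assert (Hdel : 0 < delta) by (unfold delta; lra).
  assert (Hsum : forall N, delta <= sum_f_R0 d (S N)).
  { induction N as [|N IH].
    - simpl. unfold d, delta. rewrite Rplus_0_r.
      pose proof (Hind 0%nat) as H'. simpl in H'. rewrite !Rplus_0_r in H'. change (INR 0) with 0; change (INR 1) with 1; rewrite Rplus_0_r; lra.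
    - rewrite tech5. pose proof (Hind (S (S N))). unfold d at 2. lra. }
  assert (Hbig : forall N, delta < ph n (a + INR (S (S N)))).
  { intro N.
    assert (E : sum_f_R0 (fun k => fr n (y + INR k)) (S N)
      = sum_f_R0 d (S N) + sum_f_R0 (fun k => JJ n (a + INR k)) (S N)).
    { unfold d. rewrite minus_sum. ring. }
    rewrite telescope in E.
    assert (P := psum_le _ _ (S (S N)) HS (fun k => ltac:(left; apply fr_pos; pose proof (pos_INR k); lra))).
    rewrite tech5 in P.
    assert (0 < fr n (y + INR (S (S N)))) by (apply fr_pos; pose proof (pos_INR (S (S N))); lra).
    pose proof (Hsum N). lra. }
  destruct (INR_unbounded (/ delta)) as [N HN].
  assert (Hid : 0 < / delta) by (apply Rinv_0_lt_compat; auto).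
  specialize (Hbig N).
  assert (HN1 : INR N <= INR (S (S N))) by (apply le_INR; lia).
  assert (HN2 : 1 <= INR (S (S N))) by (apply (le_INR 1); lia).
  assert (Hz := ph_small n (a + INR (S (S N))) Hn ltac:(lra)).
  assert (/ (a + INR (S (S N))) < / / delta).
  { apply Rinv_lt_contravar. nra. lra. }
  rewrite Rinv_inv in H. lra.
Qed.

Lemma ph_mono (n : nat) (a c : R) : (1 <= n)%nat -> 0 < a -> a <= c -> ph n c <= ph n a.
Proof.
  intros Hn Ha Hac. unfold ph. apply Rinv_le_contravar.
  apply Rmult_lt_0_compat. apply lt_0_INR; lia. apply pow_lt; lra.
  apply Rmult_le_compat_l. apply pos_INR. apply pow_incr; lra.
Qed.

Lemma upper_core (n : nat) (y a : R) : (1 <= n)%nat -> 0 < y -> 0 < a ->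
  infinite_sum (fun k => fr n (y + INR k)) (ph n a) -> y < a + /2.
Proof.
  intros Hn Hy Ha HS.
  destruct (Rlt_le_dec y (a + /2)) as [L|L]; auto. exfalso.
  set (c := y - /2).
  assert (Hc : 0 < c) by (unfold c; lra).
  assert (Hm : forall k, fr n (y + INR k) < JJ n (c + INR k)).
  { intro k. replace (y + INR k) with ((c + INR k) + /2) by (unfold c; ring).
    apply midpoint; auto. pose proof (pos_INR k); lra. }
  set (delta := JJ n c - fr n y).
  assert (Hdel : 0 < delta).
  { unfold delta. pose proof (Hm 0%nat). simpl in H. rewrite !Rplus_0_r in H. lra. }
  assert (Hb : forall N, sum_f_R0 (fun k => fr n (y + INR k)) N <= ph n c - delta).
  { intro N.
    assert (sum_f_R0 (fun k => fr n (y + INR k) - JJ n (c + INR k)) N <= - delta).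
    { induction N as [|N IH].
      - simpl. rewrite !Rplus_0_r. unfold delta. lra.
      - rewrite tech5. pose proof (Hm (S N)). lra. }
    rewrite minus_sum, telescope in H.
    assert (0 < ph n (c + INR (S N))) by (apply ph_pos; auto; pose proof (pos_INR (S N)); lra).
    lra. }
  assert (HL := lim_le _ _ _ HS Hb).
  assert (ph n c <= ph n a) by (apply ph_mono; auto; unfold c; lra).
  lra.
Qed.

Lemma pbound (s : nat) (t : R) (N : nat) : (1 <= s)%nat -> 0 < t ->
  sum_f_R0 (fun k => fr s (t + INR k)) N <= fr s t + ph s (t + /2).
Proof.
  intros Hs Ht.
  assert (Hp : 0 < ph s (t + /2)) by (apply ph_pos; auto; lra).
  destruct N as [|N].
  - simpl. rewrite Rplus_0_r. lra.
  - rewrite decomp_sum by lia. simpl pred. change (INR 0) with 0. rewrite Rplus_0_r.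
    assert (sum_f_R0 (fun i => fr s (t + INR (S i))) N <= sum_f_R0 (fun k => JJ s (t + /2 + INR k)) N).
    { apply sum_Rle. intros k _. left.
      replace (t + INR (S k)) with ((t + /2 + INR k) + /2) by (rewrite S_INR; field).
      apply midpoint; auto. pose proof (pos_INR k); lra. }
    rewrite telescope in H.
    assert (0 < ph s (t + /2 + INR (S N))) by (apply ph_pos; auto; pose proof (pos_INR (S N)); lra).
    lra.
Qed.

Definition Z (s : nat) (t : R) := Series (fun k => fr s (t + INR k)).

Lemma Z_spec (s : nat) (t : R) : (1 <= s)%nat -> 0 < t ->
  infinite_sum (fun k => fr s (t + INR k)) (Z s t).
Proof.
  intros Hs Ht.
  assert (Hpos : forall k, 0 < fr s (t + INR k)) by (intro k; apply fr_pos; pose proof (pos_INR k); lra).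
  destruct (growing_cv (fun N => sum_f_R0 (fun k => fr s (t + INR k)) N)) as [l Hl].
  - intro N. cbv beta. rewrite tech5. pose proof (Hpos (S N)). lra.
  - exists (fr s t + ph s (t + /2)). intros v [N ->]. apply pbound; auto.
  - assert (E : Z s t = l).
    { unfold Z. apply is_series_unique. apply is_series_Reals. exact Hl. }
    rewrite E. exact Hl.
Qed.

Lemma Z_ge (s : nat) (t : R) : (1 <= s)%nat -> 0 < t -> fr s t <= Z s t.
Proof.
  intros Hs Ht. pose proof (psum_le _ _ 0 (Z_spec s t Hs Ht)) as H.
  simpl in H. rewrite Rplus_0_r in H. apply H. intro k. left. apply fr_pos.
  pose proof (pos_INR k); lra.
Qed.

Lemma Z_le (s : nat) (t : R) : (1 <= s)%nat -> 0 < t -> Z s t <= fr s t + ph s (t + /2).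
Proof.
  intros Hs Ht. apply (lim_le _ _ _ (Z_spec s t Hs Ht)). intro N. apply pbound; auto.
Qed.

Lemma fr_mono (s : nat) (a b : R) : 0 < a -> a <= b -> fr s b <= fr s a.
Proof.
  intros Ha Hab. unfold fr. apply Rinv_le_contravar. apply pow_lt; lra. apply pow_incr; lra.
Qed.

Lemma Z_lip (s : nat) (t t' : R) : (1 <= s)%nat -> 0 < t -> t <= t' ->
  0 <= Z s t - Z s t' <= (t' - t) * INR (S s) * Z (S s) t.
Proof.
  intros Hs Ht Htt.
  assert (HD := isum_minus _ _ _ _ (Z_spec s t Hs Ht) (Z_spec s t' Hs ltac:(lra))).
  split.
  - apply (lim_ge _ _ _ HD). intro N. apply cond_pos_sum. intro k.
    assert (fr s (t' + INR k) <= fr s (t + INR k)) by (apply fr_mono; pose proof (pos_INR k); lra).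
    lra.
  - apply (lim_le _ _ _ HD). intro N.
    apply Rle_trans with (sum_f_R0 (fun k => (t' - t) * INR (S s) * fr (S s) (t + INR k)) N).
    + apply sum_Rle. intros k _. pose proof (pos_INR k).
      pose proof (Tang s (t' + INR k) (t + INR k) ltac:(lra) ltac:(lra)).
      unfold fr. replace (t' + INR k - (t + INR k)) with (t' - t) in H0 by ring. nra.
    + rewrite <- (sum_eq (fun k => fr (S s) (t + INR k) * ((t' - t) * INR (S s)))) by (intros; ring).
      rewrite <- scal_sum. apply Rmult_le_compat_l.
      apply Rmult_le_pos; [lra| apply pos_INR].
      apply psum_le. apply Z_spec; auto. intro k. left. apply fr_pos. pose proof (pos_INR k); lra.
Qed.

Lemma isum_ext (a b : nat -> R) (l : R) : (forall k, a k = b k) ->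
  infinite_sum a l -> infinite_sum b l.
Proof.
  intros E H eps He. destruct (H eps He) as [N HN]. exists N. intros m Hm.
  rewrite <- (sum_eq a b) by auto. apply HN; auto.
Qed.

Definition clamp (t1 t2 t : R) := Rmax t1 (Rmin t t2).

Lemma clamp_in (t1 t2 t : R) : t1 <= t2 -> t1 <= clamp t1 t2 t <= t2.
Proof. intros H. unfold clamp, Rmax, Rmin. repeat destruct Rle_dec; lra. Qed.

Lemma clamp_id (t1 t2 t : R) : t1 <= t <= t2 -> clamp t1 t2 t = t.
Proof. intros H. unfold clamp, Rmax, Rmin. repeat destruct Rle_dec; lra. Qed.

Lemma clamp_lip (t1 t2 u v : R) : t1 <= t2 ->
  Rabs (clamp t1 t2 u - clamp t1 t2 v) <= Rabs (u - v).
Proof.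
  intros H. unfold clamp, Rmax, Rmin. repeat destruct Rle_dec; unfold Rabs;
  repeat destruct Rcase_abs; lra.
Qed.

Lemma lip_cont (f : R -> R) (L : R) : 0 <= L ->
  (forall u v, Rabs (f u - f v) <= L * Rabs (u - v)) -> continuity f.
Proof.
  intros HL H x. unfold continuity_pt, continue_in, limit1_in, limit_in.
  intros eps He. exists (eps / (L + 1)). split. apply Rdiv_lt_0_compat; lra.
  intros y [_ Hy]. simpl in *. unfold R_dist in *. specialize (H y x).
  assert (L * Rabs (y - x) <= L * (eps / (L + 1))) by (apply Rmult_le_compat_l; lra).
  assert (L * (eps / (L + 1)) = eps - eps / (L + 1)) by (field; lra).
  assert (0 < eps / (L + 1)) by (apply Rdiv_lt_0_compat; lra).
  lra.
Qed.

Lemma Z_lip2 (s : nat) (t1 u v : R) : (1 <= s)%nat -> 0 < t1 -> t1 <= u -> t1 <= v ->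
  Rabs (Z s u - Z s v) <= INR (S s) * Z (S s) t1 * Rabs (u - v).
Proof.
  intros Hs Ht1 Hu Hv.
  assert (HL : forall a b, t1 <= a -> a <= b -> 0 <= Z s a - Z s b <= (b - a) * (INR (S s) * Z (S s) t1)).
  { intros a b Ha Hb. destruct (Z_lip s a b Hs ltac:(lra) Hb) as [H1 H2].
    destruct (Z_lip (S s) t1 a ltac:(lia) Ht1 Ha) as [H3 _].
    assert (0 <= INR (S s)) by apply pos_INR.
    split; auto. assert ((b - a) * INR (S s) * Z (S s) a <= (b - a) * (INR (S s) * Z (S s) t1)).
    { rewrite Rmult_assoc. apply Rmult_le_compat_l. lra. apply Rmult_le_compat_l; lra. }
    lra. }
  destruct (Rle_dec u v) as [L|L].
  - destruct (HL u v Hu L). rewrite (Rabs_pos_eq (Z s u - Z s v)) by lra.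
    rewrite (Rabs_minus_sym u v), (Rabs_pos_eq (v - u)) by lra. lra.
  - destruct (HL v u Hv ltac:(lra)). rewrite (Rabs_minus_sym (Z s u)), (Rabs_pos_eq (Z s v - Z s u)) by lra.
    rewrite (Rabs_pos_eq (u - v)) by lra. lra.
Qed.

Lemma pt_eq (m : nat) (t : R) (k : nat) :
  polygamma_term (S m) t k = INR (fact (S m)) * fr (S m) (t + INR k).
Proof. unfold polygamma_term, fr. rewrite Nat.add_1_r. reflexivity. Qed.

Theorem theorem2p1 (n : nat) (x : R) :
  (1 <= n)%nat -> 0 < x ->
  (exists y, 0 < y /\ psi_abs n y x) /\
  (forall y, 0 < y -> psi_abs n y x -> lb n x < y /\ y < ub n x).
Proof.
  intros Hn Hx. destruct n as [|m]; [lia|].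
  set (F := INR (fact (S m))).
  assert (HF1 : 1 <= F) by (unfold F; apply (le_INR 1); apply lt_O_fact).
  assert (Hm : (1 <= S m)%nat) by lia.
  split.
  -
    set (t1 := / (x + 1)).
    assert (Ht1 : 0 < t1) by (unfold t1; apply Rinv_0_lt_compat; lra).
    assert (Ht1' : t1 <= 1).
    { unfold t1. rewrite <- Rinv_1. apply Rinv_le_contravar; lra. }
    set (t2 := 2 * F / x + 1 + t1).
    assert (H2F : 0 < 2 * F / x) by (apply Rdiv_lt_0_compat; lra).
    assert (Ht12 : t1 < t2) by (unfold t2; lra).
    set (h := fun t => x - F * Z (S m) (clamp t1 t2 t)).
    assert (Hc : continuity h).
    { apply (lip_cont h (F * (INR (S (S m)) * Z (S (S m)) t1))).
      - apply Rmult_le_pos; [lra|]. apply Rmult_le_pos. apply pos_INR.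
        pose proof (Z_ge (S (S m)) t1 ltac:(lia) Ht1). pose proof (fr_pos (S (S m)) t1 Ht1). lra.
      - intros u v. unfold h.
        replace (x - F * Z (S m) (clamp t1 t2 u) - (x - F * Z (S m) (clamp t1 t2 v)))
          with (F * (Z (S m) (clamp t1 t2 v) - Z (S m) (clamp t1 t2 u))) by ring.
        rewrite Rabs_mult, (Rabs_pos_eq F) by lra.
        destruct (clamp_in t1 t2 u) as [Hu1 _]; [lra|].
        destruct (clamp_in t1 t2 v) as [Hv1 _]; [lra|].
        pose proof (Z_lip2 (S m) t1 _ _ Hm Ht1 Hv1 Hu1).
        pose proof (clamp_lip t1 t2 v u ltac:(lra)).
        assert (0 <= INR (S (S m)) * Z (S (S m)) t1).
        { apply Rmult_le_pos. apply pos_INR.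
          pose proof (Z_ge (S (S m)) t1 ltac:(lia) Ht1). pose proof (fr_pos (S (S m)) t1 Ht1). lra. }
        rewrite (Rabs_minus_sym u v). rewrite Rmult_assoc. apply Rmult_le_compat_l; [lra|].
        apply Rle_trans with (INR (S (S m)) * Z (S (S m)) t1 * Rabs (clamp t1 t2 v - clamp t1 t2 u)); auto.
        apply Rmult_le_compat_l; auto. }
    assert (Hh1 : h t1 < 0).
    { unfold h. rewrite clamp_id by lra.
      pose proof (Z_ge (S m) t1 Hm Ht1).
      assert (t1 ^ S (S m) <= t1).
      { change (t1 ^ S (S m)) with (t1 * t1 ^ S m).
        assert (t1 ^ S m <= 1) by (rewrite <- (pow1 (S m)); apply pow_incr; lra).
        nra. }
      assert (/ t1 <= fr (S m) t1).
      { unfold fr. apply Rinv_le_contravar; auto. apply pow_lt; lra. }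
      unfold t1 in H1 at 1. rewrite Rinv_inv in H1.
      assert (x + 1 <= Z (S m) t1) by lra. nra. }
    assert (Hh2 : 0 < h t2).
    { unfold h. rewrite clamp_id by lra.
      assert (Ht2 : 1 <= t2) by (unfold t2; lra).
      pose proof (Z_le (S m) t2 Hm ltac:(lra)).
      assert (fr (S m) t2 <= / t2).
      { unfold fr. apply Rinv_le_contravar; [lra|]. rewrite <- (pow_1 t2) at 1. apply Rle_pow; auto; lia. }
      assert (ph (S m) (t2 + /2) < / t2).
      { apply Rle_lt_trans with (/ (t2 + /2)). apply ph_small; auto; lra.
        apply Rinv_lt_contravar; nra. }
      assert (E : x * t2 = 2 * F + x * (1 + t1)) by (unfold t2; field; lra).
      assert (2 * F < x * t2) by nra.
      assert (F * (2 / t2) < x).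
      { apply Rmult_lt_reg_r with t2; [lra|].
        replace (F * (2 / t2) * t2) with (2 * F) by (field; lra). lra. }
      assert (Z (S m) t2 < 2 / t2) by (unfold Rdiv; lra).
      assert (F * Z (S m) t2 < F * (2 / t2)) by (apply Rmult_lt_compat_l; lra).
      lra. }
    destruct (IVT h t1 t2 Hc Ht12 Hh1 Hh2) as [z [Hz Hhz]].
    exists z. split; [lra|].
    unfold h in Hhz. rewrite clamp_id in Hhz by lra.
    unfold psi_abs.
    assert (HS := isum_scal _ _ F (Z_spec (S m) z Hm ltac:(lra))).
    replace x with (F * Z (S m) z) by lra.
    apply (isum_ext _ _ _ (fun k => eq_sym (pt_eq m z k))). exact HS.
  -
    intros y Hy Hpsi. unfold psi_abs in Hpsi.
    assert (HS0 := isum_ext _ _ _ (pt_eq m y) Hpsi).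
    assert (HS1 := isum_scal _ _ (/ F) HS0).
    assert (HS : infinite_sum (fun k => fr (S m) (y + INR k)) (/ F * x)).
    { eapply isum_ext; [|exact HS1]. intro k. cbv beta. fold F. field. lra. }
    set (b := INR (fact (S m - 1)) / x).
    assert (Hfm : 0 < INR (fact m)) by (apply lt_0_INR; apply lt_O_fact).
    assert (Eb : b = INR (fact m) / x) by (unfold b; f_equal; f_equal; f_equal; lia).
    assert (Hb : 0 < b) by (rewrite Eb; apply Rdiv_lt_0_compat; auto).
    set (a := Rpower b (1 / INR (S m))).
    assert (Ha : 0 < a) by apply Rpower_pos.
    assert (HSm : 0 < INR (S m)) by (apply lt_0_INR; lia).
    assert (Ean : a ^ S m = b).
    { unfold a. rewrite <- Rpower_pow by (apply Rpower_pos). rewrite Rpower_mult.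
      replace (1 / INR (S m) * INR (S m)) with 1 by (field; lra). apply Rpower_1; auto. }
    assert (EF : F = INR (S m) * INR (fact m)).
    { unfold F. change (fact (S m)) with (S m * fact m)%nat. apply mult_INR. }
    assert (Epha : ph (S m) a = / F * x).
    { unfold ph. rewrite Ean, Eb, EF. field. repeat split; lra. }
    rewrite <- Epha in HS.
    split.
    + unfold lb. fold b. fold a.
      assert (Ebase : 1 / INR (S m) * (x / INR (fact (S m - 1)) - / (a + 1) ^ S m) = JJ (S m) a).
      { unfold JJ, ph. fold b. rewrite Ean.
        assert (Efm : INR (fact (S m - 1)) = INR (fact m)) by (do 2 f_equal; lia).
        replace (x / INR (fact (S m - 1))) with (/ b) by (rewrite Eb, Efm; field; split; lra).
        assert (0 < (a + 1) ^ S m) by (apply pow_lt; lra). field. repeat split; lra. }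
      rewrite Ebase. rewrite Nat.add_1_r. unfold Rdiv. rewrite Rmult_1_l.
      rewrite <- (g_inv (S m) y Hy) at 1.
      apply g_dec; [apply lt_0_INR; lia| apply fr_pos; auto| apply lower_core; auto].
    + unfold ub. fold b. fold a. pose proof (upper_core (S m) y a Hm Hy Ha HS). lra.
Qed.
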